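(* Let $\varphi_A(X):=\sum_{i=1}^nA_iXA_i^*$ ($n\in\mathbb N$ or $n=\infty$) be a $w^*$-continuous completely positive linear map on $B(\mathcal H)$ with $\|\varphi_A\|\le1$, and let $\varphi_A^\infty(I):=\text{SOT-}\lim_{k\to\infty}\varphi_A^k(I)$ (which exists). Then $\ker(I-\varphi_A^\infty(I))$ and $\ker\varphi_A^\infty(I)$ are mutually orthogonal, so that $\mathcal H=\mathcal M\oplus\ker(I-\varphi_A^\infty(I))\oplus\ker\varphi_A^\infty(I)$ with $\mathcal M$ the orthogonal complement of the other two, and the subspaces $\ker(I-\varphi_A^\infty(I))$ and $\ker\varphi_A^\infty(I)$ are invariant under each $A_i^*$. If in addition $\varphi_A^\infty(I)$ is an orthogonal projection, then $\mathcal H=\ker(I-\varphi_A^\infty(I))\oplus\ker\varphi_A^\infty(I)$ and both subspaces are reducing for each $A_i$. *)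

(* Defs.v *)
From HB Require Import structures.
From mathcomp Require Import all_boot all_order all_algebra.
From mathcomp Require Import complex.
From mathcomp Require Import reals.
Set Implicit Arguments. Unset Strict Implicit. Unset Printing Implicit Defensive.
Import Order.TTheory GRing.Theory Num.Theory.
Local Open Scope ring_scope.

Section Hilbert.
Variables (R : realType) (V : lmodType R[i]) (ip : V -> V -> R[i]).

Definition is_inner_product : Prop :=
  [/\ (forall (a : R[i]) x y z, ip (a *: x + y) z = a * ip x z + ip y z),
      (forall x y, ip y x = Num.conj (ip x y)),
      (forall x, 0 <= ip x x) &
      (forall x, ip x x = 0 -> x = 0)].

Definition hnorm (x : V) : R := Num.sqrt (complex.Re (ip x x)).

Definition hconv (u : nat -> V) (v : V) : Prop :=
  forall e : R, 0 < e -> exists N : nat, forall k, (N <= k)%N -> hnorm (u k - v) < e.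

Definition hcauchy (u : nat -> V) : Prop :=
  forall e : R, 0 < e -> exists N : nat,
    forall k l, (N <= k)%N -> (N <= l)%N -> hnorm (u k - u l) < e.

Definition is_hilbert : Prop :=
  is_inner_product /\ (forall u, hcauchy u -> exists v, hconv u v).

Definition is_linear_op (T : V -> V) : Prop :=
  forall (a : R[i]) x y, T (a *: x + y) = a *: T x + T y.

Definition bounded_by (T : V -> V) (M : R) : Prop :=
  forall x, hnorm (T x) <= M * hnorm x.

Definition bounded_op (T : V -> V) : Prop :=
  is_linear_op T /\ exists M : R, bounded_by T M.

Definition is_adjoint (T Ts : V -> V) : Prop :=
  forall x y, ip (T x) y = ip x (Ts y).

(* index set {i | i < n} for n : nat, or all of nat for n = infinity (None) *)
Definition in_index (n : option nat) (i : nat) : bool :=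
  if n is Some m then (i < m)%N else true.

Definition kraus_psum (n : option nat) (A As : nat -> V -> V)
  (X : V -> V) (x : V) (k : nat) : V :=
  \sum_(i < k | in_index n i) A i (X (As i x)).

Definition is_kraus_map (n : option nat) (A As : nat -> V -> V)
  (phi : (V -> V) -> (V -> V)) : Prop :=
  forall X, bounded_op X -> forall x, hconv (kraus_psum n A As X x) (phi X x).

(* ||phi|| <= 1 as a map on B(H): ||phi X|| <= ||X|| for all X in B(H) *)
Definition norm_le1 (phi : (V -> V) -> (V -> V)) : Prop :=
  forall X M, bounded_op X -> bounded_by X M -> bounded_by (phi X) M.

Definition sot_limit (T : nat -> V -> V) (D : V -> V) : Prop :=
  forall x, hconv (fun k => T k x) (D x).

Definition orth_projection (P : V -> V) : Prop :=
  (forall x, P (P x) = P x) /\ (forall x y, ip (P x) y = ip x (P y)).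

End Hilbert.

(* Main.v *)
Require Import Defs.
From HB Require Import structures.
From mathcomp Require Import all_boot all_order all_algebra.
From mathcomp Require Import complex.
From mathcomp Require Import reals.
From mathcomp Require Import boolp classical_sets.
From mathcomp Require Import ring lra.
Set Implicit Arguments. Unset Strict Implicit. Unset Printing Implicit Defensive.
Import Order.TTheory GRing.Theory Num.Theory.
Local Open Scope ring_scope.

Section Cplx.
Variable R : realType.
Implicit Types z w : R[i].
Local Notation Re := (@complex.Re R).
Local Notation Im := (@complex.Im R).

Lemma ReD z w : Re (z + w) = Re z + Re w. Proof. by case: z; case: w. Qed.
Lemma ImD z w : Im (z + w) = Im z + Im w. Proof. by case: z; case: w. Qed.
Lemma ReN z : Re (- z) = - Re z. Proof. by case: z. Qed.
Lemma ImN z : Im (- z) = - Im z. Proof. by case: z. Qed.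
Lemma ReB z w : Re (z - w) = Re z - Re w. Proof. by rewrite ReD ReN. Qed.
Lemma ReM z w : Re (z * w) = Re z * Re w - Im z * Im w.
Proof. by case: z; case: w. Qed.
Lemma ImM z w : Im (z * w) = Re z * Im w + Im z * Re w.
Proof. case: z; case: w => /= *; ring. Qed.
Lemma ReJ z : Re (Num.conj z) = Re z. Proof. by case: z. Qed.
Lemma ImJ z : Im (Num.conj z) = - Im z. Proof. by case: z. Qed.
Lemma Re0 : Re (0 : R[i]) = 0. Proof. by []. Qed.
Lemma ge0E z : (0 <= z) = (Im z == 0) && (0 <= Re z).
Proof. by rewrite lecE /= eq_sym. Qed.
Lemma ceq z w : Re z = Re w -> Im z = Im w -> z = w.
Proof. by case: z; case: w => /= ? ? ? ? -> ->. Qed.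
Lemma conjR (t : R) : Num.conj (Complex t 0) = Complex t 0.
Proof. by apply: ceq; rewrite ?ReJ ?ImJ /= ?oppr0. Qed.
Lemma ReRM (t : R) z : Re (Complex t 0 * z) = t * Re z.
Proof. by rewrite ReM /= mul0r subr0. Qed.
Lemma Re_conjiM z : Re (Num.conj 'i%C * z) = Im z.
Proof. by rewrite ReM /= mul0r sub0r mulNr mul1r opprK. Qed.
Lemma Re_sum (I : Type) (r : seq I) (P : pred I) (F : I -> R[i]) :
  Re (\sum_(i <- r | P i) F i) = \sum_(i <- r | P i) Re (F i).
Proof. exact: (big_morph _ ReD Re0). Qed.
Lemma conjD z w : Num.conj (z + w) = Num.conj z + Num.conj w.
Proof. apply: ceq; rewrite ?(ReJ, ImJ, ReD, ImD); ring. Qed.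
Lemma conjM z w : Num.conj (z * w) = Num.conj z * Num.conj w.
Proof. apply: ceq; rewrite ?(ReJ, ImJ, ReM, ImM); ring. Qed.
Lemma conjN z : Num.conj (- z) = - Num.conj z.
Proof. apply: ceq; by rewrite ?(ReJ, ImJ, ReN, ImN) ?opprK. Qed.
Lemma conj0 : Num.conj (0 : R[i]) = 0.
Proof. by apply: ceq; rewrite ?(ReJ, ImJ) //= oppr0. Qed.
End Cplx.


Lemma CS_alg (R : realFieldType) (p b q : R) :
  (forall t : R, 0 <= p + 2 * t * b + t ^+ 2 * q) -> 0 <= q -> b ^+ 2 <= p * q.
Proof.
move=> H q0; have [qz|qp] := eqVneq q 0.
  have [bz|bn] := eqVneq b 0; first by rewrite bz qz; lra.
  have := H (- (p + 1) / (2 * b)).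
  have -> : p + 2 * (- (p + 1) / (2 * b)) * b + (- (p + 1) / (2 * b)) ^+ 2 * q = -1.
    by rewrite qz; field; rewrite bn.
  lra.
have := H (- b / q).
have -> : p + 2 * (- b / q) * b + (- b / q) ^+ 2 * q = (p * q - b ^+ 2) / q.
  by field.
have qp' : 0 < q by rewrite lt_neqAle eq_sym qp q0.
rewrite pmulr_lge0 ?invr_gt0 // subr_ge0 //.
Qed.

Section Forms.
Variables (R : realType) (V : lmodType R[i]).
Local Notation Re := (@complex.Re R).
Local Notation Im := (@complex.Im R).

Definition herm (f : V -> V -> R[i]) :=
  (forall (a : R[i]) x y z, f (a *: x + y) z = a * f x z + f y z) /\
  (forall x y, f y x = Num.conj (f x y)).

Variable f : V -> V -> R[i].
Hypothesis Hf : herm f.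

Lemma fDl x y z : f (x + y) z = f x z + f y z.
Proof. by case: Hf => H _; have := H 1 x y z; rewrite scale1r mul1r. Qed.
Lemma f0l z : f 0 z = 0.
Proof. have h := fDl 0 0 z; rewrite addr0 in h. by apply: (addrI (f 0 z)); rewrite addr0 -h. Qed.
Lemma fZl a x z : f (a *: x) z = a * f x z.
Proof. by case: Hf => H _; have := H a x 0 z; rewrite addr0 f0l addr0. Qed.
Lemma fNl x z : f (- x) z = - f x z.
Proof. by rewrite -scaleN1r fZl mulN1r. Qed.
Lemma fBl x y z : f (x - y) z = f x z - f y z.
Proof. by rewrite fDl fNl. Qed.
Lemma fC x y : f y x = Num.conj (f x y).
Proof. by case: Hf. Qed.
Lemma fDr x y z : f z (x + y) = f z x + f z y.
Proof. by rewrite fC fDl conjD -!fC. Qed.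
Lemma fZr a x z : f z (a *: x) = Num.conj a * f z x.
Proof. by rewrite fC fZl conjM -fC. Qed.
Lemma f0r z : f z 0 = 0.
Proof. by rewrite fC f0l conj0. Qed.
Lemma fNr x z : f z (- x) = - f z x.
Proof. by rewrite fC fNl conjN -fC. Qed.
Lemma fBr x y z : f z (x - y) = f z x - f z y.
Proof. by rewrite fDr fNr. Qed.
Lemma ReC x y : Re (f y x) = Re (f x y).
Proof. by rewrite fC ReJ. Qed.

Lemma f_quad (t : R) x y :
  Re (f (x + Complex t 0 *: y) (x + Complex t 0 *: y)) =
  Re (f x x) + 2 * t * Re (f x y) + t ^+ 2 * Re (f y y).
Proof.
rewrite fDl !fDr !fZl !fZr conjR !ReD !ReRM ReC; ring.
Qed.

Hypothesis Hpos : forall x, 0 <= Re (f x x).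

Lemma f_CS x y : Re (f x y) ^+ 2 <= Re (f x x) * Re (f y y).
Proof.
apply: CS_alg => // t; rewrite -f_quad; exact: Hpos.
Qed.

Lemma f_zero x y : Re (f x x) = 0 -> f x y = 0.
Proof.
move=> H0.
have Rz : forall y, Re (f x y) = 0.
  move=> w; have := f_CS x w; rewrite H0 mul0r => h.
  have : Re (f x w) ^+ 2 = 0 by apply/eqP; rewrite eq_le h sqr_ge0.
  by move/eqP; rewrite sqrf_eq0 => /eqP.
apply: ceq; first by rewrite Rz.
have -> : Im (f x y) = Re (f x ('i%C *: y)) by rewrite fZr Re_conjiM.
by rewrite Rz.
Qed.
End Forms.


Section Hil.
Variables (R : realType) (V : lmodType R[i]) (ip : V -> V -> R[i]).
Hypothesis Hip : is_inner_product ip.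
Local Notation Re := (@complex.Re R).
Local Notation Im := (@complex.Im R).
Local Notation hnorm := (hnorm ip).

Lemma ip_herm : herm ip.
Proof. by case: Hip. Qed.
Lemma ip_ge0 x : 0 <= ip x x.
Proof. by case: Hip. Qed.
Lemma ip_pos x : 0 <= Re (ip x x).
Proof. by have := ip_ge0 x; rewrite ge0E => /andP[]. Qed.
Lemma ip_real x : Im (ip x x) = 0.
Proof. by have := ip_ge0 x; rewrite ge0E => /andP[/eqP]. Qed.

Definition n2 x := Re (ip x x).

Lemma n2_ge0 x : 0 <= n2 x. Proof. exact: ip_pos. Qed.
Lemma ipxx x : ip x x = Complex (n2 x) 0.
Proof. by apply: ceq => //=; rewrite ip_real. Qed.
Lemma n2_eq0 x : n2 x = 0 -> x = 0.
Proof.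
move=> h; case: Hip => _ _ _; apply; by rewrite ipxx h.
Qed.
Lemma hnorm_ge0 x : 0 <= hnorm x. Proof. exact: sqrtr_ge0. Qed.
Lemma hnorm_sq x : hnorm x ^+ 2 = n2 x.
Proof. exact/sqr_sqrtr/ip_pos. Qed.

Lemma ip_CS x y : `|Re (ip x y)| <= hnorm x * hnorm y.
Proof.
have h := f_CS ip_herm ip_pos x y.
have hx := hnorm_sq x; have hy := hnorm_sq y.
have := hnorm_ge0 x; have := hnorm_ge0 y.
rewrite /n2 in hx hy; rewrite -hx -hy in h.
move: h; set b := Re _; set a := hnorm x; set c := hnorm y => h h1 h2.
rewrite -exprMn in h; have : 0 <= a * c by rewrite mulr_ge0.
move: h; set d := a * c => h h3.
rewrite ler_norml; apply/andP; split; nra.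
Qed.

Lemma ip_CS1 x y : Re (ip x y) <= hnorm x * hnorm y.
Proof. exact: le_trans (ler_norm _) (ip_CS x y). Qed.

Lemma n2D x y : n2 (x + y) = n2 x + 2 * Re (ip x y) + n2 y.
Proof.
rewrite /n2 (fDl ip_herm) !(fDr ip_herm) !ReD (ReC ip_herm y x); ring.
Qed.

Lemma hnorm_le v c : 0 <= c -> n2 v <= c ^+ 2 -> hnorm v <= c.
Proof. move=> c0; rewrite -hnorm_sq => h; have := hnorm_ge0 v; nra. Qed.
Lemma hnorm_lt v c : 0 <= c -> n2 v < c ^+ 2 -> hnorm v < c.
Proof. move=> c0; rewrite -hnorm_sq => h; have := hnorm_ge0 v; nra. Qed.

Lemma hnD x y : hnorm (x + y) <= hnorm x + hnorm y.
Proof.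
apply: hnorm_le; first by rewrite addr_ge0 ?hnorm_ge0.
rewrite n2D -!hnorm_sq; have := ip_CS1 x y; nra.
Qed.

Lemma n2N x : n2 (- x) = n2 x.
Proof. by rewrite /n2 (fNl ip_herm) (fNr ip_herm) opprK. Qed.
Lemma hnN x : hnorm (- x) = hnorm x.
Proof. by rewrite /hnorm /Defs.hnorm -/(n2 _) n2N. Qed.
Lemma hnB x y : hnorm (x - y) = hnorm (y - x).
Proof. by rewrite -hnN opprB. Qed.

Lemma n2Z a x : n2 (a *: x) = (Re a ^+ 2 + Im a ^+ 2) * n2 x.
Proof.
rewrite /n2 (fZl ip_herm) (fZr ip_herm) ipxx; case: a => a1 a2 /=; ring.
Qed.
Lemma hnZ a x : hnorm (a *: x) = Num.sqrt (Re a ^+ 2 + Im a ^+ 2) * hnorm x.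
Proof.
rewrite /Defs.hnorm -!/(n2 _) n2Z sqrtrM //; by rewrite addr_ge0 ?sqr_ge0.
Qed.

Lemma ip_ext v w : (forall y, ip v y = ip w y) -> v = w.
Proof.
move=> h; apply/eqP; rewrite -subr_eq0; apply/eqP/n2_eq0.
by rewrite /n2 (fBl ip_herm) h -(fBl ip_herm) subrr (f0l ip_herm).
Qed.

Lemma ReIm_zero v y : Re (ip v y) = 0 -> Re (ip v ('i%C *: y)) = 0 -> ip v y = 0.
Proof.
move=> h1; rewrite (fZr ip_herm) Re_conjiM => h2; by apply: ceq.
Qed.
End Hil.


Section RConv.
Variable R : realType.
Definition rconv (s : nat -> R) (l : R) :=
  forall e : R, 0 < e -> exists N : nat, forall k, (N <= k)%N -> `|s k - l| < e.

Lemma absP (x e : R) : `|x| < e <-> (- e < x /\ x < e).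
Proof. by rewrite ltr_norml; split => [/andP[]|[-> ->]]. Qed.

Lemma small0 (x : R) : (forall e, 0 < e -> `|x| < e) -> x = 0.
Proof.
move=> H; apply/eqP; apply: contraT => nz.
have : 0 < `|x| by rewrite normr_gt0.
by move=> /H; rewrite ltxx.
Qed.

Lemma rconv_uniq s l l' : rconv s l -> rconv s l' -> l = l'.
Proof.
move=> h1 h2; apply/eqP; rewrite -subr_eq0; apply/eqP/small0 => e e0.
have e2 : 0 < e / 2 by rewrite divr_gt0.
have [N1 H1] := h1 _ e2; have [N2 H2] := h2 _ e2.
have := H1 (maxn N1 N2) (leq_maxl _ _); have := H2 (maxn N1 N2) (leq_maxr _ _).
move=> /absP [a1 a2] /absP [b1 b2]; apply/absP; split; lra.
Qed.

Lemma rconv_const c : rconv (fun _ => c) c.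
Proof. by move=> e e0; exists 0%N => k _; rewrite subrr normr0. Qed.

Lemma rconv_ext s t l : (forall k, s k = t k) -> rconv s l -> rconv t l.
Proof. move=> h H e e0; have [N HN] := H e e0; exists N => k /HN; by rewrite h. Qed.

Lemma rconv_add s t l m : rconv s l -> rconv t m -> rconv (fun k => s k + t k) (l + m).
Proof.
move=> h1 h2 e e0; have e2 : 0 < e / 2 by rewrite divr_gt0.
have [N1 H1] := h1 _ e2; have [N2 H2] := h2 _ e2.
exists (maxn N1 N2) => k; rewrite geq_max => /andP[k1 k2].
move: (H1 k k1) (H2 k k2) => /absP [a1 a2] /absP [b1 b2]; apply/absP; split; lra.
Qed.

Lemma rconv_opp s l : rconv s l -> rconv (fun k => - s k) (- l).
Proof.
move=> h e e0; have [N H] := h e e0; exists N => k /H.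
by rewrite -opprD normrN.
Qed.

Lemma rconv_sub s t l m : rconv s l -> rconv t m -> rconv (fun k => s k - t k) (l - m).
Proof. by move=> h1 h2; apply: rconv_add h1 (rconv_opp h2). Qed.

Lemma rconv_shift s l : rconv s l -> rconv (fun k => s k.+1) l.
Proof. move=> h e e0; have [N H] := h e e0; exists N => k Hk; apply: H; exact: leqW. Qed.

Lemma rconv_le s l c N : rconv s l -> (forall k, (N <= k)%N -> s k <= c) -> l <= c.
Proof.
move=> h H; rewrite leNgt; apply/negP => lc.
have e0 : 0 < l - c by rewrite subr_gt0.
have [N1 H1] := h _ e0.
have := H1 (maxn N N1) (leq_maxr _ _); have := H (maxn N N1) (leq_maxl _ _).
move=> a /absP [b1 b2]; lra.
Qed.

Lemma rconv_ge s l c N : rconv s l -> (forall k, (N <= k)%N -> c <= s k) -> c <= l.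
Proof.
move=> h H; rewrite -lerN2; apply: (rconv_le (rconv_opp h)) => k /H; by rewrite lerN2.
Qed.

Lemma rconv_le2 s t l m : rconv s l -> rconv t m -> (forall k, s k <= t k) -> l <= m.
Proof.
move=> h1 h2 H; rewrite -subr_ge0; apply: (rconv_ge (N := 0%N) (rconv_sub h2 h1)).
by move=> k _; rewrite subr_ge0.
Qed.
End RConv.

Section HConv.
Variables (R : realType) (V : lmodType R[i]) (ip : V -> V -> R[i]).
Hypothesis Hip : is_inner_product ip.
Local Notation Re := (@complex.Re R).
Local Notation Im := (@complex.Im R).
Local Notation hnorm := (hnorm ip).
Local Notation hconv := (hconv ip).

Lemma hnorm0 : hnorm 0 = 0.
Proof.
by rewrite /Defs.hnorm (f0l (ip_herm Hip)) /= sqrtr0.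
Qed.

Lemma hnorm_eq0 v : hnorm v = 0 -> v = 0.
Proof.
move=> h; apply: (n2_eq0 Hip); by rewrite -(hnorm_sq Hip) h expr0n.
Qed.

Lemma hconv_uniq u a b : hconv u a -> hconv u b -> a = b.
Proof.
move=> h1 h2; apply/eqP; rewrite -subr_eq0; apply/eqP/hnorm_eq0.
have : `|hnorm (a - b)| = 0; last by move/eqP; rewrite normr_eq0 => /eqP.
apply: small0 => e e0; rewrite ger0_norm ?(hnorm_ge0 ip) //.
have e2 : 0 < e / 2 by rewrite divr_gt0.
have [N1 H1] := h1 _ e2; have [N2 H2] := h2 _ e2.
have := H1 (maxn N1 N2) (leq_maxl _ _); have := H2 (maxn N1 N2) (leq_maxr _ _).
set w := u _ => b1 b2.
have : a - b = (w - b) - (w - a) by rewrite opprB [RHS]addrC addrA subrK.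

move=> ->; rewrite ger0_norm; last exact: hnorm_ge0.
apply: le_lt_trans (hnD Hip _ _) _; rewrite (hnN Hip); lra.
Qed.

Lemma hconv_const a : hconv (fun _ => a) a.
Proof. by move=> e e0; exists 0%N => k _; rewrite subrr hnorm0. Qed.

Lemma hconv_ext u v a : (forall k, u k = v k) -> hconv u a -> hconv v a.
Proof. move=> h H e e0; have [N HN] := H e e0; exists N => k /HN; by rewrite h. Qed.

Lemma hconv_shift u a : hconv u a -> hconv (fun k => u k.+1) a.
Proof. move=> h e e0; have [N H] := h e e0; exists N => k Hk; apply: H; exact: leqW. Qed.

Lemma hconv_add u v a b : hconv u a -> hconv v b -> hconv (fun k => u k + v k) (a + b).
Proof.
move=> h1 h2 e e0; have e2 : 0 < e / 2 by rewrite divr_gt0.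
have [N1 H1] := h1 _ e2; have [N2 H2] := h2 _ e2.
exists (maxn N1 N2) => k; rewrite geq_max => /andP[k1 k2].
have := H1 k k1; have := H2 k k2 => b1 b2.
have -> : u k + v k - (a + b) = (u k - a) + (v k - b).
  by rewrite opprD addrACA.
apply: le_lt_trans (hnD Hip _ _) _; lra.
Qed.

Lemma hconv_scale c u a : hconv u a -> hconv (fun k => c *: u k) (c *: a).
Proof.
move=> h e e0; set K := Num.sqrt (Re c ^+ 2 + Im c ^+ 2).
have K0 : 0 <= K by exact: sqrtr_ge0.
have e1 : 0 < e / (K + 1) by rewrite divr_gt0 // ltr_wpDl.
have [N H] := h _ e1; exists N => k /H hk.
rewrite -scalerBr (hnZ Hip) -/K.
have := hnorm_ge0 ip (u k - a); set z := hnorm _ => z0.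
have : K * z <= K * (e / (K + 1)) by rewrite ler_wpM2l // ltW.
have : K * (e / (K + 1)) < e.
  rewrite mulrA ltr_pdivrMr ?ltr_wpDl //; nra.
lra.
Qed.

Lemma lin_add (T : V -> V) : is_linear_op T -> forall x y, T (x + y) = T x + T y.
Proof. by move=> H x y; have := H 1 x y; rewrite !scale1r. Qed.
Lemma lin0 (T : V -> V) : is_linear_op T -> T 0 = 0.
Proof.
move=> H; have h := lin_add H 0 0; rewrite addr0 in h.
by apply: (addrI (T 0)); rewrite addr0 -h.
Qed.
Lemma linZ (T : V -> V) : is_linear_op T -> forall a x, T (a *: x) = a *: T x.
Proof. by move=> H a x; have := H a x 0; rewrite (lin0 H) !addr0. Qed.
Lemma linN (T : V -> V) : is_linear_op T -> forall x, T (- x) = - T x.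
Proof. by move=> H x; rewrite -scaleN1r linZ // scaleN1r. Qed.
Lemma linB (T : V -> V) : is_linear_op T -> forall x y, T (x - y) = T x - T y.
Proof. by move=> H x y; rewrite lin_add // linN. Qed.

Lemma hconv_op (T : V -> V) M u a : is_linear_op T -> bounded_by ip T M ->
  hconv u a -> hconv (fun k => T (u k)) (T a).
Proof.
move=> Tl TM h e e0.
have e1 : 0 < e / (`|M| + 1) by rewrite divr_gt0 // ltr_wpDl.
have [N H] := h _ e1; exists N => k /H hk.
rewrite -linB //; apply: le_lt_trans (TM _) _.
have := hnorm_ge0 ip (u k - a); move: hk; set z := hnorm _ => hk z0.
have : M * z <= `|M| * z by rewrite ler_wpM2r // ler_norm.
have : `|M| * z <= `|M| * (e / (`|M| + 1)) by rewrite ler_wpM2l // ltW.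
have : `|M| * (e / (`|M| + 1)) < e.
  rewrite mulrA ltr_pdivrMr ?ltr_wpDl //; nra.
lra.
Qed.

Lemma rconv_ipl u a y : hconv u a -> rconv (fun k => Re (ip (u k) y)) (Re (ip a y)).
Proof.
move=> h e e0; set K := hnorm y.
have K0 : 0 <= K by exact: hnorm_ge0.
have e1 : 0 < e / (K + 1) by rewrite divr_gt0 // ltr_wpDl.
have [N H] := h _ e1; exists N => k /H hk.
rewrite -ReB -(fBl (ip_herm Hip)); apply: le_lt_trans (ip_CS Hip _ _) _.
have := hnorm_ge0 ip (u k - a); move: hk; set z := hnorm _ => hk z0.
rewrite -/K.
have : z * K <= (e / (K + 1)) * K by rewrite ler_wpM2r // ltW.
have : (e / (K + 1)) * K < e.
  rewrite mulrAC ltr_pdivrMr ?ltr_wpDl //; nra.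
lra.
Qed.
End HConv.


Lemma dec_le (R : realType) (a : nat -> R) : (forall k, a k.+1 <= a k) ->
  forall k m, (k <= m)%N -> a m <= a k.
Proof.
move=> H k m km; rewrite -(subnKC km); elim: (m - k)%N => [|d IH]; first by rewrite addn0.
by rewrite addnS; apply: le_trans (H _) IH.
Qed.

Lemma mono_cauchy (R : realType) (a : nat -> R) : (forall k, 0 <= a k) ->
  (forall k, a k.+1 <= a k) ->
  forall e, 0 < e -> exists N, forall k m, (N <= k)%N -> (k <= m)%N -> a k - a m < e.
Proof.
move=> H0 H e e0.
pose E := fun r : R => exists k, r = a k.
have hE : has_inf E.
  split; first by exists (a 0%N), 0%N.
  by exists 0 => r [k ->].
have [r [N ->] hr] := inf_adherent e0 hE.
exists N => k m Nk km.
have h1 := dec_le H Nk.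
have h2 : inf E <= a m by apply: ge_inf => //; [case: hE | exists m].
lra.
Qed.

Section Ops.
Variables (R : realType) (V : lmodType R[i]) (ip : V -> V -> R[i]).
Hypothesis Hip : is_inner_product ip.
Local Notation Re := (@complex.Re R).
Local Notation Im := (@complex.Im R).
Local Notation hnorm := (hnorm ip).
Local Notation hconv := (hconv ip).
Local Notation n2 := (n2 ip).
Let Hh := ip_herm Hip.

Definition selfadj (T : V -> V) := forall x y, ip (T x) y = ip x (T y).
Definition pos_op (T : V -> V) := forall x, 0 <= Re (ip (T x) x).
Definition le_id (T : V -> V) := forall x, Re (ip (T x) x) <= n2 x.

Lemma T_herm T : is_linear_op T -> selfadj T -> herm (fun x y => ip (T x) y).
Proof.
move=> Tl Ts; split.
  by move=> a x y z; rewrite Tl (fDl Hh) (fZl Hh).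
by move=> x y; rewrite Ts (fC Hh).
Qed.

Lemma psd_ker T x : is_linear_op T -> selfadj T -> pos_op T ->
  Re (ip (T x) x) = 0 -> T x = 0.
Proof.
move=> Tl Ts Tp h; have := f_zero (T_herm Tl Ts) Tp (T x) h.
by case: Hip => _ _ _; apply.
Qed.

Lemma psd_sq T : is_linear_op T -> selfadj T -> pos_op T -> le_id T ->
  forall z, n2 (T z) <= Re (ip (T z) z).
Proof.
move=> Tl Ts Tp Tb z.
have := f_CS (T_herm Tl Ts) Tp z (T z); rewrite /= -/(n2 _).
have := Tb (T z); have := Tp (T z); have := Tp z; have := n2_ge0 Hip (T z).
set a := n2 _; set b := Re (ip (T z) z); set c := Re _ => ha hb hc hca h.
nra.
Qed.

Lemma psd_bnd T : is_linear_op T -> selfadj T -> pos_op T -> le_id T ->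
  bounded_by ip T 1.
Proof.
move=> Tl Ts Tp Tb z; rewrite mul1r; apply: (hnorm_le Hip); first exact: hnorm_ge0.
rewrite (hnorm_sq Hip); exact: le_trans (psd_sq Tl Ts Tp Tb z) (Tb z).
Qed.

Lemma weak_sa T : is_linear_op T ->
  (forall x y, Re (ip (T x) y) = Re (ip x (T y))) -> selfadj T.
Proof.
move=> Tl H x y; apply: ceq; first exact: H.
have e : forall v w, Im (ip v w) = Re (ip v ('i%C *: w)).
  by move=> v w; rewrite (fZr Hh) Re_conjiM.
by rewrite !e H (linZ Tl).
Qed.

Hypothesis Hcomp : forall u, hcauchy ip u -> exists v, hconv u v.

Definition good_seq (T : nat -> V -> V) :=
  [/\ forall k, is_linear_op (T k), forall k, selfadj (T k),
      forall k, pos_op (T k), forall k, le_id (T k) &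
      forall k x, Re (ip (T k.+1 x) x) <= Re (ip (T k x) x)].

Lemma good_est T : good_seq T -> forall k m x, (k <= m)%N ->
  n2 (T k x - T m x) <= Re (ip (T k x) x) - Re (ip (T m x) x).
Proof.
case=> Tl Ts Tp Tb Tm k m x km.
pose S := fun z => T k z - T m z.
have Sl : is_linear_op S.
  move=> a u v; rewrite /S !Tl scalerBr opprD addrACA //.
have Ss : selfadj S.
  by move=> u v; rewrite /S (fBl Hh) (fBr Hh) !Ts.
have SRe : forall w, Re (ip (S w) w) = Re (ip (T k w) w) - Re (ip (T m w) w).
  by move=> w; rewrite /S (fBl Hh) ReB.
have Sp : pos_op S.
  by move=> w; rewrite SRe subr_ge0; apply: (dec_le (a := fun j => Re (ip (T j w) w))).
have Sb : le_id S.
  by move=> w; rewrite SRe; have := Tb k w; have := Tp m w; lra.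
by have := psd_sq Sl Ss Sp Sb x; rewrite SRe.
Qed.

Lemma mcl T : good_seq T -> exists D, sot_limit ip T D.
Proof.
move=> G.
have H : forall x, exists v, hconv (fun k => T k x) v.
  move=> x; apply: Hcomp => e e0.
  have [Tl Ts Tp Tb Tm] := G.
  have e2 : 0 < e ^+ 2 by rewrite exprn_gt0.
  have [N HN] := mono_cauchy (a := fun k => Re (ip (T k x) x)) (fun k => Tp k x) (fun k => Tm k x) e2.
  exists N => k l Nk Nl.
  case: (leqP k l) => kl.
    apply: (hnorm_lt Hip); first exact: ltW.
    apply: le_lt_trans (good_est G x kl) _; exact: HN.
  rewrite (hnB Hip); apply: (hnorm_lt Hip); first exact: ltW.
  apply: le_lt_trans (good_est G x (ltnW kl)) _; exact: HN Nl (ltnW kl).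
exists (fun x => projT1 (cid (H x))) => x; exact: (projT2 (cid (H x))).
Qed.
End Ops.


Section Lim.
Variables (R : realType) (V : lmodType R[i]) (ip : V -> V -> R[i]).
Hypothesis Hip : is_inner_product ip.
Local Notation Re := (@complex.Re R).
Local Notation Im := (@complex.Im R).
Local Notation hnorm := (hnorm ip).
Local Notation hconv := (hconv ip).
Local Notation n2 := (n2 ip).
Local Notation selfadj := (selfadj ip).
Local Notation pos_op := (pos_op ip).
Local Notation le_id := (le_id ip).
Local Notation good_seq := (good_seq ip).
Let Hh := ip_herm Hip.

Lemma lim_props T D : good_seq T -> sot_limit ip T D ->
  [/\ is_linear_op D, selfadj D, pos_op D, le_id D &
      ((forall k x, Re (ip (D x) x) <= Re (ip (T k x) x)) /\
      (forall x y, rconv (fun k => Re (ip (T k x) y)) (Re (ip (D x) y))))].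
Proof.
move=> [Tl Ts Tp Tb Tm] HD.
have Hr : forall x y, rconv (fun k => Re (ip (T k x) y)) (Re (ip (D x) y)).
  by move=> x y; apply: (rconv_ipl Hip y (HD x)).
have Dl : is_linear_op D.
  move=> a x y; apply: (hconv_uniq Hip (HD (a *: x + y))).
  apply: hconv_ext (hconv_add Hip (hconv_scale Hip a (HD x)) (HD y)).
  by move=> k; rewrite Tl.
have Dp : pos_op D.
  by move=> x; apply: (rconv_ge (N := 0%N) (Hr x x)) => k _; exact: Tp.
have Db : le_id D.
  by move=> x; apply: (rconv_le (N := 0%N) (Hr x x)) => k _; exact: Tb.
have DT : forall k x, Re (ip (D x) x) <= Re (ip (T k x) x).
  move=> k x; apply: (rconv_le (N := k) (Hr x x)) => m km.
  exact: (dec_le (a := fun j => Re (ip (T j x) x))).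
split => //.
apply: (weak_sa Hip Dl) => x y.
rewrite (ReC Hh (D y) x).
apply: (rconv_uniq (Hr x y)); apply: rconv_ext (Hr y x) => k.
by rewrite (ReC Hh) -Ts.
Qed.

Hypothesis Hcomp : forall u, hcauchy ip u -> exists v, hconv u v.

Lemma iter_lin (S : V -> V) k : is_linear_op S -> is_linear_op (iter k S).
Proof.
move=> Sl; elim: k => [|k IH] a x y //=.
by rewrite IH Sl.
Qed.

Lemma iter_sa (S : V -> V) k : selfadj S -> selfadj (iter k S).
Proof.
move=> Ss; elim: k => [|k IH] x y //=.
by rewrite Ss IH -iterSr iterS.
Qed.

Lemma iter_fix (S : V -> V) k y : S y = y -> iter k S y = y.
Proof. by move=> h; elim: k => [|k IH] //=; rewrite IH h. Qed.

Lemma proj (S : V -> V) : is_linear_op S -> selfadj S -> pos_op S -> le_id S ->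
  forall x, exists p, S p = p /\ forall y, S y = y -> ip (x - p) y = 0.
Proof.
move=> Sl Ss Sp Sb x.
have n2S : forall z, n2 (S z) <= n2 z.
  by move=> z; apply: le_trans (psd_sq Hip Sl Ss Sp Sb z) (Sb z).
have SB := psd_bnd Hip Sl Ss Sp Sb.
pose U k := iter (k + k) S.
have UE : forall k z, Re (ip (U k z) z) = n2 (iter k S z).
  by move=> k z; rewrite /U iterD iter_sa.
have n2it : forall k z, n2 (iter k S z) <= n2 z.
  move=> k z; elim: k => [|k IH] //=; exact: le_trans (n2S _) IH.
have G : good_seq U.
  split.
  - by move=> k; apply: iter_lin.
  - by move=> k; apply: iter_sa.
  - by move=> k z; rewrite UE; exact: n2_ge0.
  - by move=> k z; rewrite UE.
  - by move=> k z; rewrite !UE iterS.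
have [P HP] := mcl Hip Hcomp G.
exists (P x).
have SSp : S (S (P x)) = P x.
  apply: (hconv_uniq Hip (hconv_op Sl SB (hconv_op Sl SB (HP x)))).
  apply: hconv_ext (hconv_shift (HP x)) => k.
  by rewrite /U addSn addnS !iterS.
have Spp : S (P x) = P x.
  pose S' := fun z => z - S z.
  have S'l : is_linear_op S'.
    by move=> a u v; rewrite /S' Sl scalerBr opprD addrACA.
  have S's : selfadj S'.
    by move=> u v; rewrite /S' (fBl Hh) (fBr Hh) Ss.
  have S'p : pos_op S'.
    by move=> z; rewrite /S' (fBl Hh) ReB subr_ge0; exact: Sb.
  have e1 : n2 (P x) = n2 (S (P x)).
    by rewrite /n2 -{1}SSp Ss.
  have : Re (ip (S' (P x)) (P x)) = 0.
    rewrite /S' (fBl Hh) ReB -/(n2 _).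
    have := psd_sq Hip Sl Ss Sp Sb (P x); have := Sb (P x); lra.
  move/(psd_ker Hip S'l S's S'p); rewrite /S' => /eqP.
  by rewrite subr_eq0 => /eqP.
split => // y Sy.
have key : forall w, S w = w -> Re (ip (x - P x) w) = 0.
  move=> w Sw.
  have h1 : Re (ip (P x) w) = Re (ip x w).
    apply: (rconv_uniq (rconv_ipl Hip w (HP x))).
    apply: rconv_ext (rconv_const (Re (ip x w))) => k.
    by rewrite /U iter_sa // (iter_fix _ Sw).
  by rewrite (fBl Hh) ReB h1 subrr.
apply: (ReIm_zero Hip); first exact: key.
by apply: key; rewrite (linZ Sl) Sy.
Qed.
End Lim.


Section Kraus.
Variables (R : realType) (V : lmodType R[i]) (ip : V -> V -> R[i]).
Variables (n : option nat) (A As : nat -> V -> V) (phi : (V -> V) -> (V -> V)).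
Hypothesis Hip : is_inner_product ip.
Hypothesis HA : forall i, in_index n i -> bounded_op ip (A i) /\ is_adjoint ip (A i) (As i).
Hypothesis Hk : is_kraus_map ip n A As phi.
Hypothesis Hn : norm_le1 ip phi.
Local Notation Re := (@complex.Re R).
Local Notation hnorm := (hnorm ip).
Local Notation hconv := (hconv ip).
Local Notation n2 := (n2 ip).
Local Notation selfadj := (selfadj ip).
Local Notation pos_op := (pos_op ip).
Local Notation le_id := (le_id ip).
Local Notation good_seq := (good_seq ip).
Let Hh := ip_herm Hip.

Lemma A_lin i : in_index n i -> is_linear_op (A i).
Proof. by move=> /HA [[]]. Qed.
Lemma A_adj i : in_index n i -> is_adjoint ip (A i) (As i).
Proof. by move=> /HA []. Qed.

Lemma ipAs i x z : in_index n i -> ip (As i x) z = ip x (A i z).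
Proof. by move=> Hi; rewrite (fC Hh) -(A_adj Hi) -(fC Hh). Qed.

Lemma As_lin i : in_index n i -> is_linear_op (As i).
Proof.
move=> Hi a x y; apply: (ip_ext Hip) => z.
by rewrite ipAs // (fDl Hh) (fZl Hh) (fDl Hh) (fZl Hh) !ipAs.
Qed.

Lemma phi_lin X : bounded_op ip X -> is_linear_op (phi X).
Proof.
move=> HX a x y; have Xl : is_linear_op X by case: HX.
apply: (hconv_uniq Hip (Hk HX (a *: x + y))).
apply: hconv_ext (hconv_add Hip (hconv_scale Hip a (Hk HX x)) (Hk HX y)) => k.
rewrite /kraus_psum scaler_sumr -big_split /=; apply: eq_bigr => i Hi.
by rewrite (As_lin Hi) Xl (A_lin Hi).
Qed.

Lemma psum_re X x y k : Re (ip (kraus_psum n A As X x k) y) =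
  \sum_(i < k | in_index n i) Re (ip (X (As i x)) (As i y)).
Proof.
rewrite /kraus_psum (big_morph (fun v => ip v y) (fun a b => fDl Hh a b y) (f0l Hh y)) Re_sum.
by apply: eq_bigr => i Hi; rewrite (A_adj Hi).
Qed.

Lemma kraus_re X x y : bounded_op ip X ->
  rconv (fun k => \sum_(i < k | in_index n i) Re (ip (X (As i x)) (As i y)))
        (Re (ip (phi X x) y)).
Proof.
move=> HX; apply: rconv_ext (rconv_ipl Hip y (Hk HX x)) => k; exact: psum_re.
Qed.

Lemma phi_sa X : bounded_op ip X -> selfadj X -> selfadj (phi X).
Proof.
move=> HX Xs; apply: (weak_sa Hip (phi_lin HX)) => x y.
rewrite (ReC Hh (phi X y) x).
apply: (rconv_uniq (kraus_re x y HX)); apply: rconv_ext (kraus_re y x HX) => k.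
by apply: eq_bigr => i _; rewrite (ReC Hh) Xs.
Qed.

Lemma term_le (F : nat -> R) l i : (forall j, in_index n j -> 0 <= F j) ->
  in_index n i -> rconv (fun N => \sum_(j < N | in_index n j) F j) l -> F i <= l.
Proof.
move=> F0 Hi h; apply: (rconv_ge (N := i.+1) h) => N iN.
rewrite (bigD1 (Ordinal iN)) //= lerDl; apply: sumr_ge0 => j /andP[Hj _].
exact: F0.
Qed.

Definition TT k := iter k phi id.

Lemma T_props k : [/\ bounded_op ip (TT k), bounded_by ip (TT k) 1,
  selfadj (TT k) & pos_op (TT k)].
Proof.
elim: k => [|k [Tb T1 Ts Tp]].
  split => //; first by split => //; exists 1 => x; rewrite mul1r.
    by move=> x; rewrite mul1r.
  by move=> x; exact: ip_pos.
have HT : bounded_op ip (TT k.+1).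
  by split; [exact: phi_lin | exists 1; exact: Hn].
split => //; first exact: Hn.
  exact: phi_sa.
move=> x; apply: (rconv_ge (N := 0%N) (kraus_re x x Tb)) => N _.
by apply: sumr_ge0 => i _; exact: Tp.
Qed.

Lemma T_mono k x : Re (ip (TT k.+1 x) x) <= Re (ip (TT k x) x).
Proof.
elim: k x => [|k IH] x.
  have [_ T1 _ _] := T_props 1.
  apply: le_trans (ip_CS1 Hip _ _) _.
  have := T1 x; rewrite mul1r /= => h.
  have := hnorm_ge0 ip x; have := hnorm_ge0 ip (phi id x).
  rewrite -/(n2 x) -(hnorm_sq Hip x); nra.
have [Tb _ _ _] := T_props k.+1; have [Tb' _ _ _] := T_props k.
apply: (rconv_le2 (kraus_re x x Tb) (kraus_re x x Tb')) => N.
by apply: ler_sum => i _; exact: IH.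
Qed.

Lemma T_good : good_seq TT.
Proof.
split.
- by move=> k; have [[]] := T_props k.
- by move=> k; have [] := T_props k.
- by move=> k; have [] := T_props k.
- move=> k x; rewrite /n2.
  exact: (dec_le (a := fun j => Re (ip (TT j x) x)) (fun j => T_mono j x) (leq0n k)).
- exact: T_mono.
Qed.
End Kraus.


Theorem theorem4p7 (R : realType) (V : lmodType R[i]) (ip : V -> V -> R[i])
  (n : option nat) (A As : nat -> V -> V) (phi : (V -> V) -> (V -> V)) :
  is_hilbert ip ->
  (forall i, in_index n i -> bounded_op ip (A i) /\ is_adjoint ip (A i) (As i)) ->
  is_kraus_map ip n A As phi ->
  norm_le1 ip phi ->
  (exists D, sot_limit ip (fun k => iter k phi id) D) /\
  (forall D, sot_limit ip (fun k => iter k phi id) D ->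
    [/\ (forall x y, D x = x -> D y = 0 -> ip x y = 0),
        (forall x, exists m k1 k0,
           [/\ x = m + k1 + k0, D k1 = k1, D k0 = 0 &
               forall y, D y = y \/ D y = 0 -> ip m y = 0]),
        (forall i x, in_index n i -> D x = x -> D (As i x) = As i x),
        (forall i x, in_index n i -> D x = 0 -> D (As i x) = 0) &
        (orth_projection ip D ->
          (forall x, exists k1 k0, [/\ x = k1 + k0, D k1 = k1 & D k0 = 0]) /\
          (forall i x, in_index n i ->
             (D x = x -> D (A i x) = A i x /\ D (As i x) = As i x) /\
             (D x = 0 -> D (A i x) = 0 /\ D (As i x) = 0)))]).
Proof.
move=> [Hip Hcomp] HA Hk Hn.
have Hh := ip_herm Hip.
have G := T_good Hip HA Hk Hn.
split; first exact: (mcl Hip Hcomp G).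
move=> D HD.
have [Dl Ds Dp Db [DT Dr]] := lim_props Hip G HD.
have orth : forall x y, D x = x -> D y = 0 -> ip x y = 0.
  by move=> x y hx hy; rewrite -hx Ds hy (f0r Hh).
pose D' := fun z => z - D z.
have D'l : is_linear_op D'.
  by move=> a u v; rewrite /D' Dl scalerBr opprD addrACA.
have D's : selfadj ip D'.
  by move=> u v; rewrite /D' (fBl Hh) (fBr Hh) Ds.
have D'p : pos_op ip D'.
  by move=> z; rewrite /D' (fBl Hh) ReB subr_ge0; exact: Db.
have D'b : le_id ip D'.
  by move=> z; rewrite /D' (fBl Hh) ReB; have := Dp z; rewrite /n2; lra.
have TB : forall k, bounded_op ip (TT phi k) by move=> k; have [] := T_props Hip HA Hk Hn k.
have TP : forall k, pos_op ip (TT phi k) by move=> k; have [] := T_props Hip HA Hk Hn k.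
have [_ _ _ Tle Tm] := G.
have inv0 : forall i x, in_index n i -> D x = 0 -> D (As i x) = 0.
  move=> i x Hi hx; apply: (psd_ker Hip Dl Ds Dp).
  apply/eqP; rewrite eq_le Dp andbT.
  have -> : 0 = complex.Re (ip (D x) x) by rewrite hx (f0l Hh).
  apply: (rconv_le2 (Dr _ _) (rconv_shift (Dr x x))) => k.
  apply: (term_le (n := n) (F := fun j => complex.Re (ip (TT phi k (As j x)) (As j x)))) => //.
    by move=> j _; exact: TP.
  exact: (kraus_re Hip HA Hk x x (TB k)).
have inv1 : forall i x, in_index n i -> D x = x -> D (As i x) = As i x.
  move=> i x Hi hx.
  have : D' (As i x) = 0.
    apply: (psd_ker Hip D'l D's D'p).
    apply/eqP; rewrite eq_le D'p andbT /D' (fBl Hh) ReB.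
    have e0 : 0 = complex.Re (ip (D x) x) - complex.Re (ip (D x) x) by rewrite subrr.
    rewrite [X in _ <= X]e0.
    apply: (rconv_le2 (rconv_sub (rconv_const _) (Dr _ _))
                      (rconv_sub (rconv_const _) (rconv_shift (Dr x x)))) => k.
    have h1 : complex.Re (ip (TT phi 1 x) x) <= complex.Re (ip (D x) x).
      by rewrite hx; exact: (Tm 0%N x).
    suff : complex.Re (ip (As i x) (As i x)) - complex.Re (ip (TT phi k (As i x)) (As i x))
       <= complex.Re (ip (TT phi 1 x) x) - complex.Re (ip (TT phi k.+1 x) x) by lra.
    apply: (term_le (n := n) (F := fun j => complex.Re (ip (As j x) (As j x)) -
                                complex.Re (ip (TT phi k (As j x)) (As j x)))) => //.
      by move=> j _; rewrite subr_ge0; exact: Tle.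
    apply: rconv_ext (rconv_sub (kraus_re Hip HA Hk x x (TB 0%N))
                                (kraus_re Hip HA Hk x x (TB k))) => N.
    by rewrite -sumrB.
  by rewrite /D' => /eqP; rewrite subr_eq0 => /eqP.
split => //.
- move=> x.
  have [p1 [Dp1 Hp1]] := proj Hip Hcomp Dl Ds Dp Db x.
  have [p0 [D'p0 Hp0]] := proj Hip Hcomp D'l D's D'p D'b x.
  have Dp0 : D p0 = 0.
    have -> : D p0 = p0 - D' p0 by rewrite /D' opprB addrC subrK.
    by rewrite D'p0 subrr.
  exists (x - p0 - p1), p1, p0; split => //; first by rewrite !subrK.
  move=> y [Dy|Dy].
    rewrite addrAC (fBl Hh) Hp1 // (fC Hh y p0) (orth y p0) //.
    by rewrite conj0 subrr.
  rewrite (fBl Hh) Hp0 ?(orth p1 y) ?subrr //.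
  by rewrite /D' Dy subr0.
- move=> [DD _]; split.
    move=> x; exists (D x), (x - D x); split => //.
      by rewrite addrC subrK.
    by rewrite (linB Dl) DD subrr.
  move=> i x Hi; split => hx.
    split; last exact: inv1.
    set w := A i x; set k0 := w - D w.
    have Dk0 : D k0 = 0 by rewrite /k0 (linB Dl) DD subrr.
    have : ip k0 k0 = 0.
      rewrite {1}/k0 (fBl Hh) Ds Dk0 (f0r Hh) subr0 /w (A_adj HA Hi).
      by rewrite (orth _ _ hx (inv0 _ _ Hi Dk0)).
    case: Hip => _ _ _ /[apply] /eqP; rewrite subr_eq0 => /eqP.
    by move=> ->.
  split; last exact: inv0.
  set w := A i x.
  have : ip (D w) (D w) = 0.
    rewrite Ds DD /w (A_adj HA Hi).
    have hA := inv1 _ _ Hi (DD w).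
    by rewrite (fC Hh) (orth _ _ hA hx) conj0.
  by case: Hip => _ _ _ /[apply].
Qed.
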